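(* Let $G=(V,E)$ be a connected graph with positive edge costs $c:E\to\mathbb{R}_+$, let $\alpha\ge 1$, and let $(U,\complement{U})$ be an $\alpha$-approximate minimum cut of $G$. Then there exist subsets $S,T\subseteq V$ with $|S|,|T|\le \lfloor 2\alpha\rfloor+1$ such that $(U,\complement{U})$ is the unique minimum $(S,T)$-terminal cut.
   Context: A cut is a partition of $V$ into two non-empty parts; for $\emptyset\ne U\subsetneq V$ write $\complement{U}=V\setminus U$, $(U,\complement{U})$ for the corresponding cut, $\delta(U)$ for the set of edges with exactly one endpoint in $U$, and $d(U)=\sum_{e\in\delta(U)}c(e)$ for its cut value. Let $\lambda=\min\{d(U):\emptyset\ne U\subsetneq V\}$. For $\alpha\ge1$, the cut $(U,\complement{U})$ is an $\alpha$-approximate minimum cut if $d(U)\le\alpha\lambda$. For disjoint non-empty $S,T\subseteq V$, a cut $(U,\complement{U})$ is an $(S,T)$-terminal cut if $S\subseteq U\subseteq V\setminus T$; a minimum $(S,T)$-terminal cut is an $(S,T)$-terminal cut of minimum cut value $d(U)$. *)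

(* Defs.v *)
From HB Require Import structures.
From mathcomp Require Import all_boot all_order all_algebra.
Set Implicit Arguments. Unset Strict Implicit. Unset Printing Implicit Defensive.
Import Order.TTheory GRing.Theory Num.Theory.
Local Open Scope ring_scope.

Section Cuts.
Variables (R : realFieldType) (V : finType).
Variable (E : {set {set V}}).
Variable (c : {set V} -> R).

Definition is_graph : Prop := forall e, e \in E -> #|e| = 2%N.
Definition adj : rel V := fun x y => [set x; y] \in E.
Definition connected_graph : Prop := forall x y : V, connect adj x y.
Definition positive_costs : Prop := forall e, e \in E -> 0 < c e.

Definition is_cut (U : {set V}) : Prop := U != set0 /\ U != setT.
Definition delta (U : {set V}) : {set {set V}} :=
  [set e in E | #|e :&: U| == 1%N].
Definition cutval (U : {set V}) : R := \sum_(e in delta U) c e.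

Definition is_min_cut_value (lam : R) : Prop :=
  (exists W, is_cut W /\ cutval W = lam) /\
  (forall W, is_cut W -> lam <= cutval W).

Definition approx_min_cut (alpha : R) (U : {set V}) : Prop :=
  is_cut U /\ exists lam, is_min_cut_value lam /\ cutval U <= alpha * lam.

Definition terminal_cut (S T U : {set V}) : Prop :=
  [/\ S != set0, T != set0, [disjoint S & T],
      is_cut U & (S \subset U) && (U \subset ~: T)].

Definition unique_min_terminal_cut (S T U : {set V}) : Prop :=
  terminal_cut S T U /\
  forall W, terminal_cut S T W -> W != U -> cutval U < cutval W.
End Cuts.

(* Main.v *)
Require Import Defs.
From HB Require Import structures.
From mathcomp Require Import all_boot all_order all_algebra.
From mathcomp Require Import reals.
From mathcomp Require Import zify lra.
Import Order.TTheory GRing.Theory Num.Theory.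
Set Implicit Arguments. Unset Strict Implicit. Unset Printing Implicit Defensive.

Lemma sumF (a b n : nat) : (\sum_(a <= j < b) (j <= n) = minn b n.+1 - a)%N.
Proof.
elim: b => [|b IH]; first by rewrite big_geq.
case: (leqP a b) => hab.
  rewrite big_nat_recr //= IH; case: (leqP b n) => hbn /=; lia.
by rewrite big_geq //; lia.
Qed.

Lemma sumG (a b n : nat) : (\sum_(a <= j < b) (n < j) = (b - a) - (minn b n.+1 - a))%N.
Proof.
have H : (\sum_(a <= j < b) (j <= n) + \sum_(a <= j < b) (n < j) = b - a)%N.
  rewrite -big_split /=.
  rewrite (eq_bigr (fun _ => 1%N)); last by move=> j _; rewrite ltnNge; case: (j <= n).
  by rewrite sum_nat_const_nat muln1.
by rewrite sumF in H; lia.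
Qed.

Section SetLemmas.
Variable V : finType.

Lemma sum_in (S a : {set V}) : a \subset S -> (\sum_(u in S) (u \in a) = #|a|)%N.
Proof.
move=> sub.
rewrite -sum1_card.
rewrite (eq_bigr (fun u => if u \in a then 1%N else 0%N)); last by move=> u _; case: (u \in a).
rewrite -big_mkcondr /=.
apply: eq_bigl => u; apply/andP/idP => [[] //|ua]; split=> //; exact: (subsetP sub).
Qed.

Lemma hq1 (S a : {set V}) : a \subset S -> (\sum_(u in S) (a == [set u]) <= (#|a| == 1%N))%N.
Proof.
move=> sub; case: (eqVneq #|a| 1%N) => h /=.
  rewrite -h -(sum_in sub); apply: leq_sum => u _.
  by case: eqP => // ->; rewrite set11.
rewrite big1 // => u _; case: eqP => // ha; by rewrite ha cards1 eqxx in h.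
Qed.

Lemma sum_notin (S a : {set V}) : a \subset S ->
  (\sum_(u in S) (u \notin a) = #|S| - #|a|)%N.
Proof.
move=> sub.
have H : (\sum_(u in S) (u \in a) + \sum_(u in S) (u \notin a) = #|S|)%N.
  rewrite -big_split /= -sum1_card; apply: eq_bigr => u _; by case: (u \in a).
by rewrite (sum_in sub) in H; lia.
Qed.

Lemma neC (p q : bool) : (p != q) = (q != p). Proof. by case: p; case: q. Qed.
Lemma negneg (p q : bool) : (~~ p != ~~ q) = (p != q). Proof. by case: p; case: q. Qed.

Lemma edge_out (S a : {set V}) : a \subset S ->
  (\sum_(u in S) (a == [set u]) + 1 * #|S| + \sum_(3 <= j < #|S|.+1) (#|a| < j)
   <= 1 * 2 + \sum_(u in S) (u \notin a) + 1 * (#|S| - 2))%N.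
Proof.
move=> sub.
have h1 := hq1 sub.
rewrite (sum_notin sub) sumG.
have ak : (#|a| <= #|S|)%N by apply: subset_leq_card.
case: (eqVneq #|a| 1%N) h1 => ha h1 /=; lia.
Qed.

Lemma edge_in (S a b : {set V}) : a \subset S -> b \subset S -> (#|b| <= #|a|)%N ->
  (\sum_(u in S) ((a == [set u]) != (b == [set u]))
   + \sum_(3 <= j < #|S|.+1) ((j <= #|a|) != (j <= #|b|))
   <= \sum_(u in S) ((u \notin a) != (u \notin b)))%N.
Proof.
move=> sa sb ba.
have J : (\sum_(3 <= j < #|S|.+1) ((j <= #|a|) != (j <= #|b|))
          = (minn #|S|.+1 #|a|.+1 - 3) - (minn #|S|.+1 #|b|.+1 - 3))%N.
  have H : (\sum_(3 <= j < #|S|.+1) (j <= #|a|) =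
     \sum_(3 <= j < #|S|.+1) ((j <= #|a|) != (j <= #|b|)) + \sum_(3 <= j < #|S|.+1) (j <= #|b|))%N.
    rewrite -big_split /=; apply: eq_bigr => j _.
    case: (leqP j #|b|) => jb; first by rewrite (leq_trans jb ba).
    by case: (j <= #|a|).
  by rewrite !sumF in H; lia.
rewrite J.
have HW : (\sum_(u in S) ((u \notin a) != (u \notin b)) = #|a :\: b| + #|b :\: a|)%N.
  rewrite -(sum_in (S:=S) (a := a :\: b)); last by apply: subset_trans sa; apply: subsetDl.
  rewrite -(sum_in (S:=S) (a := b :\: a)); last by apply: subset_trans sb; apply: subsetDl.
  rewrite -big_split /=; apply: eq_bigr => u _; rewrite !inE negneg.
  by case: (u \in a); case: (u \in b).
rewrite HW.
have ca := cardsID b a; have cb := cardsID a b; rewrite setIC in cb.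
case: (eqVneq a b) => [<-|nab].
  rewrite big1; last by move=> u _; rewrite eqxx.
  lia.
have q1 : (0 < #|a :\: b| + #|b :\: a|)%N.
  rewrite lt0n; apply/negP => /eqP h.
  have h1 : #|a :\: b| = 0%N by lia.
  have h2 : #|b :\: a| = 0%N by lia.
  move/eqP: h1; rewrite cards_eq0 setD_eq0 => s1.
  move/eqP: h2; rewrite cards_eq0 setD_eq0 => s2.
  by move: nab; rewrite eqEsubset s1 s2.
have hq : (\sum_(u in S) ((a == [set u]) != (b == [set u])) <= (#|a| == 1%N) + (#|b| == 1%N))%N.
  apply: leq_trans (leq_add (hq1 sa) (hq1 sb)).
  rewrite -big_split /=; apply: leq_sum => u _.
  by case: (a == [set u]); case: (b == [set u]).
move: hq; case: (eqVneq #|a| 1%N) => h1; case: (eqVneq #|b| 1%N) => h2 /= hq; lia.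
Qed.


Lemma edge_abs (S a b : {set V}) (bx by' : bool) : a \subset S -> b \subset S ->
 (\sum_(u in S) ((bx && (a == [set u])) != (by' && (b == [set u]))) + (bx != by') * #|S|
 + \sum_(3 <= j < #|S|.+1) ((bx && ~~(j <= #|a|)) != (by' && ~~(j <= #|b|)))
 <= (bx != by') * 2 + \sum_(u in S) ((bx && (u \notin a)) != (by' && (u \notin b)))
    + (bx != by') * (#|S| - 2))%N.
Proof.
move=> sa sb.
case: bx; case: by' => /=.
- rewrite !mul0n !addn0 addnC.
  rewrite (eq_bigr (fun j => nat_of_bool ((j <= #|a|) != (j <= #|b|)))); last by move=> j _; rewrite negneg.
  case: (leqP #|b| #|a|) => h; first by rewrite addnC; apply: edge_in.
  rewrite (eq_bigr (fun j => nat_of_bool ((j <= #|b|) != (j <= #|a|)))); last by move=> j _; rewrite neC.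
  rewrite (eq_bigr (fun u => nat_of_bool ((b == [set u]) != (a == [set u])))); last by move=> u _; rewrite neC.
  rewrite [X in (_ <= X)%N](eq_bigr (fun u => nat_of_bool ((u \notin b) != (u \notin a)))); last by move=> u _; rewrite neC.
  by rewrite addnC; apply: edge_in => //; apply: ltnW.
- rewrite (eq_bigr (fun u => nat_of_bool (a == [set u]))); last by move=> u _; case: (a == _).
  rewrite (eq_bigr (fun j => nat_of_bool (#|a| < j))); last by move=> j _; rewrite ltnNge; case: (j <= _).
  rewrite [X in (_ <= _ + X + _)%N](eq_bigr (fun u => nat_of_bool (u \notin a))); last by move=> u _; case: (u \in a).
  exact: edge_out.
- rewrite (eq_bigr (fun u => nat_of_bool (b == [set u]))); last by move=> u _; case: (b == _).
  rewrite (eq_bigr (fun j => nat_of_bool (#|b| < j))); last by move=> j _; rewrite ltnNge; case: (j <= _).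
  rewrite [X in (_ <= _ + X + _)%N](eq_bigr (fun u => nat_of_bool (u \notin b))); last by move=> u _; case: (u \in b).
  exact: edge_out.
- rewrite !big1 //.
Qed.

End SetLemmas.
Local Open Scope ring_scope.

Section Graph.
Variables (R : realType) (V : finType) (E : {set {set V}}) (c : {set V} -> R).
Hypothesis graphE : is_graph E.
Hypothesis posc : positive_costs E c.
Local Notation d := (cutval E c).

Definition cr (e X : {set V}) : bool := #|e :&: X| == 1%N.

Lemma cutvalE X : d X = \sum_(e in E) c e *+ cr e X.
Proof.
rewrite /cutval /delta big_mkcond [RHS]big_mkcond /=.
apply: eq_bigr => e _; rewrite inE /cr.
by case: (e \in E); case: (_ == _); rewrite ?mulr1n ?mulr0n.
Qed.

Lemma cr2' (x y : V) X : x != y -> #|[set x; y] :&: X| = ((x \in X) + (y \in X))%N.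
Proof.
move=> xy.
have H : forall z, (z \in [set x; y] :&: X) = ((z == x) && (x \in X)) || ((z == y) && (y \in X)).
  move=> z; rewrite !inE; case: (eqVneq z x) => [->|zx] /=.
    by rewrite (negbTE xy) /=; case: (x \in X).
  by case: (eqVneq z y) => [->|] //=; rewrite ?andbF.
case Hx: (x \in X); case Hy: (y \in X).
- rewrite (_ : _ :&: _ = [set x; y]) ?cards2 ?xy //.
  by apply/setP => z; rewrite H Hx Hy !inE !andbT.
- rewrite (_ : _ :&: _ = [set x]) ?cards1 //.
  by apply/setP => z; rewrite H Hx Hy !inE andbT andbF orbF.
- rewrite (_ : _ :&: _ = [set y]) ?cards1 //.
  by apply/setP => z; rewrite H Hx Hy !inE andbT andbF.
- rewrite (_ : _ :&: _ = set0) ?cards0 //.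
  by apply/setP => z; rewrite H Hx Hy !inE !andbF.
Qed.

Lemma cr2 x y X : x != y -> cr [set x; y] X = ((x \in X) != (y \in X)).
Proof. by move=> xy; rewrite /cr cr2' //; case: (x \in X); case: (y \in X). Qed.

Lemma edgeP e : e \in E -> exists x y, x != y /\ e = [set x; y].
Proof. by move=> eE; apply/cards2P; rewrite graphE. Qed.

Lemma c_ge0 e : e \in E -> 0 <= c e.
Proof. by move=> eE; apply: ltW; apply: posc. Qed.

Lemma mulrn_le (x : R) (m n : nat) : 0 <= x -> (m <= n)%N -> x *+ m <= x *+ n.
Proof.
move=> x0 mn; rewrite -(subnKC mn) mulrnDr lerDl; exact: mulrn_wge0.
Qed.

Lemma sum_le (f g : {set V} -> nat) : (forall e, e \in E -> (f e <= g e)%N) ->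
  \sum_(e in E) c e *+ f e <= \sum_(e in E) c e *+ g e.
Proof.
move=> H; apply: ler_sum => e eE; apply: mulrn_le; [exact: c_ge0 | exact: H].
Qed.

Lemma sum_cut (I : Type) (r : seq I) (P : pred I) (F : I -> {set V}) :
  \sum_(i <- r | P i) d (F i) = \sum_(e in E) c e *+ (\sum_(i <- r | P i) cr e (F i))%N.
Proof.
rewrite (eq_bigr (fun i => \sum_(e in E) c e *+ cr e (F i))); last by move=> i _; rewrite cutvalE.
rewrite exchange_big; apply: eq_bigr => e _; by rewrite sumrMnr.
Qed.

Lemma cut_mul X k : \sum_(e in E) c e *+ (cr e X * k)%N = d X *+ k.
Proof. by rewrite cutvalE -sumrMnl; apply: eq_bigr => e _; rewrite mulrnA. Qed.

Lemma cutval_ge0 X : 0 <= d X.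
Proof. rewrite cutvalE; apply: sumr_ge0 => e eE; apply: mulrn_wge0; exact: c_ge0. Qed.

Lemma cutval_sub A B : d (A :&: B) + d (A :|: B) <= d A + d B.
Proof.
rewrite !cutvalE -!big_split /=.
rewrite (eq_bigr (fun e => c e *+ (cr e (A :&: B) + cr e (A :|: B))%N)); last by move=> e _; rewrite mulrnDr.
rewrite [X in _ <= X](eq_bigr (fun e => c e *+ (cr e A + cr e B)%N)); last by move=> e _; rewrite mulrnDr.
apply: sum_le => e eE; have [x [y [xy ->]]] := edgeP eE.
rewrite !cr2 // !inE.
by case: (x \in A); case: (x \in B); case: (y \in A); case: (y \in B).
Qed.

Lemma cutvalC X : d (~: X) = d X.
Proof.
rewrite !cutvalE; apply: eq_bigr => e eE; have [x [y [xy ->]]] := edgeP eE.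
by rewrite !cr2 // !inE negneg.
Qed.

Lemma cutval_pos W : connected_graph E -> is_cut W -> 0 < d W.
Proof.
move=> conn [W0 WT].
have [x xW] := set0Pn _ W0.
have [y yW] : exists y, y \notin W.
  have : ~: W != set0.
    apply: contraNneq WT => h; by rewrite -(setCK W) h setC0.
  by case/set0Pn => y; rewrite inE => ?; exists y.
case: (boolP [exists a, exists b, adj E a b && ((a \in W) != (b \in W))]).
  case/existsP => a /existsP [b /andP [ab neq]].
  have anb : a != b by apply: contraNneq neq => ->.
  rewrite /adj in ab.
  rewrite cutvalE (bigD1 [set a; b]) //=.
  rewrite cr2 // neq /= mulr1n.
  apply: (lt_le_trans (posc ab)); rewrite lerDl.
  apply: sumr_ge0 => e /andP [eE _]; apply: mulrn_wge0; exact: c_ge0.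
move=> /existsPn H.
have cl : closed (adj E) W.
  move=> a b ab; have := H a; move/existsPn/(_ b); rewrite ab /=.
  by case: (a \in W); case: (b \in W).
have := closed_connect cl (conn x y).
by rewrite xW (negbTE yW).
Qed.


Section Count.
Variables (U S : {set V}) (W : V -> {set V}).
Hypothesis SU : S \subset U.
Hypothesis HW : forall u, u \in S ->
  [/\ W u \subset U, S :\ u \subset W u, u \notin W u & d (W u) <= d U].
Hypothesis Hhit : forall X : {set V}, S \subset X -> X \proper U -> d U < d X.

Definition N x := [set v in S | x \notin W v].
Definition Q u := [set x in U | N x == [set u]].
Definition L j := [set x in U | (j <= #|N x|)%N].

Lemma NS x : N x \subset S.
Proof. by apply/subsetP => v; rewrite inE => /andP[]. Qed.

Lemma Nself s : s \in S -> N s = [set s].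
Proof.
move=> sS; apply/setP => v; rewrite !inE.
case: (eqVneq v s) => [->|vs]; first by have [_ _ sW _] := HW sS; rewrite sS sW.
case vS: (v \in S) => //=.
have [_ sub _ _] := HW vS.
have : s \in S :\ v by rewrite !inE sS eq_sym vs.
by move/(subsetP sub) => ->.
Qed.

Lemma uQ u : u \in S -> u \in Q u.
Proof. by move=> uS; rewrite inE (subsetP SU) // Nself // eqxx. Qed.

Lemma hitL j : (2 <= j)%N -> d U <= d (U :\: L j).
Proof.
move=> j2; case: (eqVneq (L j) set0) => [->|ne]; first by rewrite setD0.
apply: ltW; apply: Hhit.
  apply/subsetP => s sS; rewrite !inE (subsetP SU) // Nself // cards1 andbT.
  by rewrite -ltnNge (leq_trans _ j2).
have [x xL] := set0Pn _ ne.
rewrite properE subsetDl /=; apply/subsetPn; exists x; first by move: xL; rewrite inE => /andP[].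
by rewrite in_setD xL.
Qed.

Lemma memW x u : u \in S -> (x \in W u) = (x \in U) && (u \notin N x).
Proof.
move=> uS; have [WU _ _ _] := HW uS.
case xU: (x \in U) => /=; first by rewrite inE uS /= negbK.
by apply/negP => /(subsetP WU); rewrite xU.
Qed.

Lemma memUL x j : (x \in U :\: L j) = (x \in U) && ~~ (j <= #|N x|)%N.
Proof. by rewrite !inE; case: (x \in U); rewrite ?andbT ?andbF. Qed.

Lemma edge_count e : e \in E ->
 (\sum_(u in S) cr e (Q u) + cr e U * #|S| + \sum_(3 <= j < #|S|.+1) cr e (U :\: L j)
 <= cr e U * 2 + \sum_(u in S) cr e (W u) + cr e U * (#|S| - 2))%N.
Proof.
move=> eE; have [x [y [xy ->]]] := edgeP eE.
rewrite !cr2 //.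
rewrite (eq_bigr (fun u => nat_of_bool (((x \in U) && (N x == [set u])) != ((y \in U) && (N y == [set u]))))); last by move=> u _; rewrite cr2 // /Q !inE.
rewrite (eq_bigr (fun j => nat_of_bool (((x \in U) && ~~ (j <= #|N x|)%N) != ((y \in U) && ~~ (j <= #|N y|)%N)))); last by move=> j _; rewrite cr2 // !memUL.
rewrite [X in (_ <= _ + X + _)%N](eq_bigr (fun u => nat_of_bool (((x \in U) && (u \notin N x)) != ((y \in U) && (u \notin N y))))); last by move=> u uS; rewrite cr2 // !memW.
exact: edge_abs (NS x) (NS y).
Qed.

Lemma count_main : \sum_(u in S) d (Q u) <= d U *+ 2.
Proof.
have H := sum_le edge_count.
rewrite (eq_bigr (fun e => c e *+ (\sum_(u in S) cr e (Q u))%N + c e *+ (cr e U * #|S|)%N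
   + c e *+ (\sum_(3 <= j < #|S|.+1) cr e (U :\: L j))%N)) in H; last by move=> e _; rewrite !mulrnDr.
rewrite [X in _ <= X](eq_bigr (fun e => c e *+ (cr e U * 2)%N + c e *+ (\sum_(u in S) cr e (W u))%N
   + c e *+ (cr e U * (#|S| - 2))%N)) in H; last by move=> e _; rewrite !mulrnDr.
rewrite !big_split /= !cut_mul -!sum_cut in H.
have HW2 : \sum_(u in S) d (W u) <= d U *+ #|S|.
  rewrite -sumr_const; apply: ler_sum => u uS; by have [_ _ _ ->] := HW uS.
have HL : d U *+ (#|S| - 2) <= \sum_(3 <= j < #|S|.+1) d (U :\: L j).
  rewrite (_ : (#|S| - 2 = #|S|.+1 - 3)%N) // -sumr_const_nat.
  by apply: ler_sum_nat => j /andP [j3 _]; apply: hitL; apply: leq_trans j3.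
move: H HW2 HL.
set a := \sum_(u in S) d (Q u); set b := \sum_(u in S) d (W u).
set l := \sum_(3 <= j < #|S|.+1) d (U :\: L j).
set k1 := d U *+ #|S|; set k2 := d U *+ (#|S| - 2); set k3 := d U *+ 2.
move=> H1 H2 H3; lra.
Qed.

End Count.


Definition hitb (U S : {set V}) : bool :=
  [forall X : {set V}, ((S \subset X) && (X \proper U)) ==> (d U < d X)].

Lemma hitbP (U S : {set V}) : reflect (forall X : {set V}, S \subset X -> X \proper U -> d U < d X) (hitb U S).
Proof.
apply: (iffP forallP) => H X.
  by move=> h1 h2; move: (H X); rewrite h1 h2.
by apply/implyP => /andP [h1 h2]; exact: H.
Qed.

Lemma one_side (U : {set V}) (lam alpha : R) : is_cut U -> 0 < lam ->
  (forall X, is_cut X -> lam <= d X) -> 0 <= alpha -> d U <= alpha * lam ->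
  exists S, [/\ S != set0, S \subset U,
     (#|S|%:R <= (Num.floor (2 * alpha))%:~R + 1 :> R) & hitb U S].
Proof.
move=> [U0 UT] lam0 lamP a0 dU.
suff: forall n (S : {set V}), (#|S| <= n)%N -> S != set0 -> S \subset U -> hitb U S ->
  exists S, [/\ S != set0, S \subset U,
     (#|S|%:R <= (Num.floor (2 * alpha))%:~R + 1 :> R) & hitb U S].
  move=> /(_ #|U| U (leqnn _) U0 (subxx _)); apply.
  by apply/hitbP => X UX XU; rewrite properE UX andbF in XU.
elim=> [|n IH] S Sn S0 SU hS.
  by move: Sn; rewrite leqn0 cards_eq0 (negbTE S0).
case: (boolP (#|S|%:R <= (Num.floor (2 * alpha))%:~R + 1 :> R)) => hk; first by exists S.
have fl : 2 * alpha < (Num.floor (2 * alpha))%:~R + 1.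
  by move: (floorD1_gt (2 * alpha)); rewrite intrD => h; exact: h.
have f0 : (0 : R) <= (Num.floor (2 * alpha))%:~R.
  by rewrite ler0z floor_ge0; lra.
rewrite -ltNge in hk.
have k2 : (1 < #|S|)%N by rewrite -(ltr_nat R); lra.
case: (boolP [exists u in S, hitb U (S :\ u)]).
  case/existsP => u /andP [uS hu].
  have e : #|S| = #|S :\ u|.+1 by rewrite (cardsD1 u S) uS.
  apply: (IH (S :\ u)) => //.
  - by move: Sn; rewrite e ltnS.
  - by rewrite -cards_eq0 -lt0n -ltnS -e.
  - exact: subset_trans (subsetDl _ _) SU.
move/existsPn => Hn.
pose W u := odflt set0 [pick X : {set V} | (S :\ u \subset X) && (X \proper U) && (d X <= d U)].
have HW : forall u, u \in S ->
  [/\ W u \subset U, S :\ u \subset W u, u \notin W u & d (W u) <= d U].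
  move=> u uS; have := Hn u; rewrite uS /= => /forallPn [X].
  rewrite negb_imply => /andP [/andP [h1 h2] h3].
  rewrite /W; case: pickP => [Y /andP [/andP [y1 y2] y3] | none] /=; last first.
    by have := none X; rewrite h1 h2 /= leNgt h3.
  split => //; first exact: proper_sub y2.
  apply/negP => uY.
  have SY : S \subset Y.
    apply/subsetP => v vS; case: (eqVneq v u) => [->//|vu].
    by apply: (subsetP y1); rewrite !inE vu vS.
  by move/hitbP: hS => /(_ Y SY y2); rewrite ltNge y3.
have hS' := hitbP _ _ hS.
have C := count_main SU HW hS'.
have low : lam *+ #|S| <= \sum_(u in S) d (Q U S W u).
  rewrite -sumr_const; apply: ler_sum => u uS; apply: lamP; split.
    by apply/set0Pn; exists u; exact: (@uQ U S W SU HW u uS).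
  apply: contraNneq UT => QT; rewrite eqEsubset subsetT /=.
  apply/subsetP => x _; have : x \in Q U S W u by rewrite QT inE.
  by rewrite inE => /andP [].
have : lam *+ #|S| <= (alpha * lam) *+ 2.
  apply: le_trans low _; apply: le_trans C _; exact: ler_wMn2r.
rewrite -[lam *+ _]mulr_natl -[(alpha * lam) *+ 2]mulr_natl mulrA => H.
have k2a : 2 * alpha < #|S|%:R by lra.
have h3 : 2 * alpha * lam < #|S|%:R * lam by rewrite ltr_pM2r.
by have := lt_le_trans h3 H; rewrite ltxx.
Qed.

End Graph.

Unset Implicit Arguments.

Theorem theorem1p1 (R : realType) (V : finType) (E : {set {set V}})
  (c : {set V} -> R) (alpha : R) (U : {set V}) :
  is_graph E -> connected_graph E -> positive_costs E c ->
  1 <= alpha -> approx_min_cut E c alpha U ->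
  exists S T : {set V},
    [/\ (#|S|%:R <= (Num.floor (2 * alpha))%:~R + 1 :> R),
        (#|T|%:R <= (Num.floor (2 * alpha))%:~R + 1 :> R) &
        unique_min_terminal_cut E c S T U].
Proof.
move=> gE conn pc a1 [Ucut [lam [[[W0 [W0cut W0v]] lamP] dU]]].
have lam0 : 0 < lam by rewrite -W0v; exact: (cutval_pos pc conn W0cut).
have a0 : 0 <= alpha by lra.
have [S [S0 SU Sk hS]] := one_side gE pc Ucut lam0 lamP a0 dU.
have Ccut : is_cut (~: U).
  case: Ucut => U0 UT; split.
    apply: contraNneq UT => h; by rewrite -(setCK U) h setC0.
  apply: contraNneq U0 => h; by rewrite -(setCK U) h setCT.
have dC : cutval E c (~: U) <= alpha * lam by rewrite (cutvalC c gE).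
have [T [T0 TU Tk hT]] := one_side gE pc Ccut lam0 lamP a0 dC.
have UT : U \subset ~: T by rewrite subsetC.
exists S, T; split => //; split.
  split => //; first by rewrite disjoints_subset (subset_trans SU UT).
  by rewrite SU UT.
move=> X [_ _ _ Xcut /andP [SX XT]] XU.
have sub := cutval_sub gE pc X U.
have h1 : X :&: U != U -> cutval E c U < cutval E c (X :&: U).
  move=> ne; apply: (hitbP _ _ _ _ hS); first by rewrite subsetI SX SU.
  by rewrite properEneq ne subsetIr.
have h2 : X :|: U != U -> cutval E c U < cutval E c (X :|: U).
  move=> ne; rewrite -(cutvalC c gE U) -(cutvalC c gE (X :|: U)).
  apply: (hitbP _ _ _ _ hT).
    by rewrite setCU subsetI TU andbT -subsetC.
  rewrite properEneq setCS subsetUr andbT.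
  by apply: contra_neq ne => /setC_inj.
case: (eqVneq (X :&: U) U) => e1; case: (eqVneq (X :|: U) U) => e2.
- exfalso; move/negP: XU; apply; rewrite eqEsubset.
  by rewrite -{1}e2 subsetUl /= -{1}e1 subsetIl.
- rewrite e1 in sub; have := h2 e2; lra.
- rewrite e2 in sub; have := h1 e1; lra.
- have := h1 e1; have := h2 e2; lra.
Qed.
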